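(* Let $M$ be a finitely generated monoid. Then the number of ends of $M$ with respect to a finite generating set does not depend on the choice of finite generating set.
   Context: For a monoid $M$ generated by a finite set $X$, the right Cayley graph is the directed graph with vertex set $M$ and an edge labelled $a$ from $m$ to $ma$ for each $m\in M$, $a\in X$. The number of ends of $M$ with respect to $X$ is the supremum, over all finite sets $F$ of vertices, of the number of infinite connected components of the graph obtained by deleting $F$ from the underlying undirected graph of the right Cayley graph. *)

(* Defs.v *)
(* A monoid is given by a carrier M, an operation op and a unit e
   (axioms are hypotheses of the theorem). Finite sets are lists. *)
From Stdlib Require Import List Relations ClassicalEpsilon.
Import ListNotations.

Section Ends.
Variables (M : Type) (op : M -> M -> M) (e : M).

Definition generates (X : list M) : Prop :=
  forall m : M, exists l : list M,
    (forall a, In a l -> In a X) /\ m = fold_right op e l.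

(* Underlying undirected graph of the right Cayley graph: x -- y iff y = x a
   or x = y a for some a in X. *)
Definition cayley_adj (X : list M) (x y : M) : Prop :=
  exists a, In a X /\ (y = op x a \/ x = op y a).

Definition adj_minus (X F : list M) (x y : M) : Prop :=
  ~ In x F /\ ~ In y F /\ cayley_adj X x y.

(* Connectedness in the graph with F deleted (for vertices outside F). *)
Definition conn_minus (X F : list M) : relation M :=
  clos_refl_trans M (adj_minus X F).

Definition infinite_set (P : M -> Prop) : Prop :=
  ~ exists l : list M, forall x, P x -> In x l.

Definition infinite_component (X F : list M) (v : M) : Prop :=
  ~ In v F /\ infinite_set (fun w => conn_minus X F v w).

Definition at_least_inf_comps (X F : list M) (n : nat) : Prop :=
  exists vs : list M, length vs = n /\
    (forall v, In v vs -> infinite_component X F v) /\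
    NoDup vs /\
    (forall v w, In v vs -> In w vs -> v <> w -> ~ conn_minus X F v w).

(* k is the supremum over finite F of the number of infinite components
   (None = infinity). *)
Definition is_num_ends (X : list M) (k : option nat) : Prop :=
  match k with
  | Some m => (forall F n, at_least_inf_comps X F n -> n <= m) /\
              exists F, at_least_inf_comps X F m
  | None => forall n, exists F, at_least_inf_comps X F n
  end.

Definition num_ends (X : list M) : option nat :=
  epsilon (inhabits None) (fun k => is_num_ends X k).

End Ends.

(* Main.v *)
Require Import Defs.
From Stdlib Require Import List Relations Classical FunctionalExtensionality PropExtensionality.
Import ListNotations.

Definition mulset {M : Type} (op : M -> M -> M) (F R : list M) : list M :=
  flat_map (fun f => map (op f) R) F.

Lemma in_mulset {M : Type} (op : M -> M -> M) F R f r :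
  In f F -> In r R -> In (op f r) (mulset op F R).
Proof. intros Hf Hr. unfold mulset. apply in_flat_map. exists f. split; auto. apply in_map; auto. Qed.

Lemma mulset_incl {M : Type} (op : M -> M -> M) (e : M) (idr : forall x, op x e = x) F R f :
  In e R -> In f F -> In f (mulset op F R).
Proof. intros He Hf. pose proof (in_mulset op F R f e Hf He) as H. rewrite idr in H. exact H. Qed.

Lemma conn_sym {M : Type} (op : M -> M -> M) X F x y :
  conn_minus M op X F x y -> conn_minus M op X F y x.
Proof.
  unfold conn_minus. induction 1.
  - apply rt_step. destruct H as [H1 [H2 [a [Ha [E|E]]]]].
    repeat split; auto. exists a; auto. repeat split; auto. exists a; auto.
  - apply rt_refl.
  - eapply rt_trans; eauto.
Qed.

Lemma conn_mono {M : Type} (op : M -> M -> M) X F G x y :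
  (forall z, In z F -> In z G) ->
  conn_minus M op X G x y -> conn_minus M op X F x y.
Proof.
  intros Hi. unfold conn_minus. induction 1.
  - apply rt_step. destruct H as [H1 [H2 H3]]. repeat split; auto.
  - apply rt_refl.
  - eapply rt_trans; eauto.
Qed.

Fixpoint sufs {M : Type} (l : list M) : list (list M) :=
  l :: match l with [] => [] | _ :: t => sufs t end.

Lemma sufs_in {M : Type} (l1 l2 : list M) : In l2 (sufs (l1 ++ l2)).
Proof.
  induction l1; simpl.
  - destruct l2; simpl; auto.
  - right. auto.
Qed.

Lemma suffix_words {M : Type} (op : M -> M -> M) (e : M) (X Y : list M) :
  (forall x, In x X -> exists l, (forall a, In a l -> In a Y) /\ x = fold_right op e l) ->
  exists R, In e R /\ forall x, In x X -> exists l, (forall a, In a l -> In a Y) /\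
     x = fold_right op e l /\ (forall l1 l2, l = l1 ++ l2 -> In (fold_right op e l2) R).
Proof.
  induction X as [|x X IH]; intros H.
  - exists [e]. split; simpl; auto. intros x [].
  - destruct IH as [R' [He HR']]. { intros; apply H; simpl; auto. }
    destruct (H x (or_introl eq_refl)) as [l [Hl Ex]].
    exists (map (fold_right op e) (sufs l) ++ R'). split.
    + apply in_or_app; auto.
    + intros z [<-|Hz].
      * exists l. repeat split; auto. intros l1 l2 ->. apply in_or_app. left.
        apply in_map. apply sufs_in.
      * destruct (HR' z Hz) as [l' [H1 [H2 H3]]]. exists l'. repeat split; auto.
        intros l1 l2 E. apply in_or_app. right. eauto.
Qed.

Lemma path_lemma {M : Type} (op : M -> M -> M) (e : M)
  (assoc : forall x y z, op x (op y z) = op (op x y) z) (idr : forall x, op x e = x)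
  Y F R l :
  (forall a, In a l -> In a Y) ->
  (forall l1 l2, l = l1 ++ l2 -> In (fold_right op e l2) R) ->
  forall u, ~ In u F -> ~ In (op u (fold_right op e l)) (mulset op F R) ->
  conn_minus M op Y F u (op u (fold_right op e l)).
Proof.
  induction l as [|a l IH]; intros HY HS u Hu Hv.
  - simpl. rewrite idr. apply rt_refl.
  - simpl in *. rewrite assoc in *.
    assert (Hu' : ~ In (op u a) F).
    { intros Hin. apply Hv. apply in_mulset; auto. apply (HS [a] l). reflexivity. }
    apply rt_trans with (y := op u a).
    + apply rt_step. split; [auto|split; [auto|exists a; split; [auto|left; reflexivity]]].
    + apply IH; auto. intros l1 l2 E. apply (HS (a :: l1) l2). simpl; congruence.
Qed.

Lemma transfer {M : Type} (op : M -> M -> M) (e : M)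
  (assoc : forall x y z, op x (op y z) = op (op x y) z) (idr : forall x, op x e = x)
  X Y F R :
  In e R ->
  (forall x, In x X -> exists l, (forall a, In a l -> In a Y) /\
     x = fold_right op e l /\ (forall l1 l2, l = l1 ++ l2 -> In (fold_right op e l2) R)) ->
  forall u v, conn_minus M op X (mulset op F R) u v -> conn_minus M op Y F u v.
Proof.
  intros He HW. unfold conn_minus at 1. induction 1.
  - destruct H as [Hu [Hv [a [Ha E]]]].
    assert (Hu' : ~ In x F) by (intro; apply Hu; apply (mulset_incl op e idr); auto).
    assert (Hv' : ~ In y F) by (intro; apply Hv; apply (mulset_incl op e idr); auto).
    destruct (HW a Ha) as [l [H1 [H2 H3]]]. subst a.
    destruct E as [E|E]; subst.
    + apply (path_lemma op e assoc idr Y F R l); auto.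
    + apply conn_sym. apply (path_lemma op e assoc idr Y F R l); auto.
  - apply rt_refl.
  - eapply rt_trans; eauto.
Qed.

Lemma fold_app1 {M : Type} (op : M -> M -> M) (e : M)
  (assoc : forall x y z, op x (op y z) = op (op x y) z)
  (idl : forall x, op e x = x) (idr : forall x, op x e = x) l y :
  fold_right op e (l ++ [y]) = op (fold_right op e l) y.
Proof.
  induction l; simpl.
  - rewrite idr, idl. auto.
  - rewrite IHl. apply assoc.
Qed.

Lemma finite_union {M : Type} (A : M -> M -> Prop) (S : list M) :
  (forall s, In s S -> exists l, forall w, A s w -> In w l) ->
  exists l, forall s w, In s S -> A s w -> In w l.
Proof.
  induction S as [|s S IH]; intros H.
  - exists []. intros s w [].
  - destruct IH as [l' Hl']. { intros; apply H; simpl; auto. }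
    destruct (H s (or_introl eq_refl)) as [l Hl].
    exists (l ++ l'). intros s0 w [<-|Hs] Hw; apply in_or_app; eauto.
Qed.

Lemma survive {M : Type} (op : M -> M -> M) (e : M)
  (assoc : forall x y z, op x (op y z) = op (op x y) z)
  (idl : forall x, op e x = x) (idr : forall x, op x e = x) Y F G v :
  generates M op e Y ->
  (forall z, In z F -> In z G) ->
  infinite_component M op Y F v ->
  exists s, ~ In s G /\ conn_minus M op Y F v s /\
    infinite_set M (fun w => conn_minus M op Y G s w).
Proof.
  intros Hgen HFG [Hv Hinf].
  set (S := e :: mulset op G Y).
  assert (Key : forall w, ~ In w G -> exists s, In s S /\ ~ In s G /\ conn_minus M op Y G s w).
  { intros w Hw. destruct (Hgen w) as [l [Hl ->]].
    revert Hl Hw. induction l as [|y l IH] using rev_ind; intros Hl Hw.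
    - exists e. simpl in *. repeat split; auto. apply rt_refl.
    - rewrite (fold_app1 op e assoc idl idr) in *.
      assert (Hy : In y Y) by (apply Hl; apply in_or_app; simpl; auto).
      destruct (classic (In (fold_right op e l) G)) as [Hin|Hnin].
      + exists (op (fold_right op e l) y). repeat split; auto.
        * right. apply in_mulset; auto.
        * apply rt_refl.
      + destruct IH as [s [H1 [H2 H3]]]; auto.
        { intros a Ha; apply Hl; apply in_or_app; auto. }
        exists s. repeat split; auto. eapply rt_trans; [exact H3|].
        apply rt_step. split; [auto|split; [auto|exists y; auto]]. }
  destruct (classic (exists s, In s S /\ ~ In s G /\ conn_minus M op Y F v s /\
    infinite_set M (fun w => conn_minus M op Y G s w))) as [[s [_ Hs]]|Hno]; [exists s; exact Hs|].
  exfalso.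
  destruct (finite_union (fun s w => conn_minus M op Y F v s /\ ~ In s G /\ conn_minus M op Y G s w) S)
    as [l Hl].
  { intros s Hs. destruct (classic (conn_minus M op Y F v s /\ ~ In s G)) as [[H1 H2]|Hn].
    - apply NNPP. intro Hc. apply Hno. exists s. repeat split; auto.
      intros [l Hl]. apply Hc. exists l. intros w [_ [_ Hw]]. auto.
    - exists []. intros w [H1 [H2 _]]. exfalso; auto. }
  apply Hinf. exists (G ++ l). intros w Hw.
  destruct (classic (In w G)) as [Hin|Hnin]; apply in_or_app; auto.
  right. destruct (Key w Hnin) as [s [H1 [H2 H3]]].
  apply (Hl s w); auto. repeat split; auto.
  eapply rt_trans; [exact Hw|]. apply conn_sym. apply (conn_mono op Y F G); auto.
Qed.

Lemma choose_list {A : Type} (Q : A -> A -> Prop) (vs : list A) :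
  (forall v, In v vs -> exists s, Q v s) -> exists ss, Forall2 Q vs ss.
Proof.
  induction vs as [|v vs IH]; intros H.
  - exists []. constructor.
  - destruct IH as [ss Hss]. { intros; apply H; simpl; auto. }
    destruct (H v (or_introl eq_refl)) as [s Hs]. exists (s :: ss). constructor; auto.
Qed.

Lemma Forall2_in_r {A : Type} (Q : A -> A -> Prop) vs ss s :
  Forall2 Q vs ss -> In s ss -> exists v, In v vs /\ Q v s.
Proof.
  induction 1; simpl; [tauto|]. intros [<-|Hs].
  - exists x. auto.
  - destruct (IHForall2 Hs) as [v [H1 H2]]. exists v; auto.
Qed.

Lemma sep {A : Type} (RV RS Q : A -> A -> Prop) vs ss :
  (forall x y, RS x y -> RV x y) ->
  (forall x y, RV x y -> RV y x) ->
  (forall x y z, RV x y -> RV y z -> RV x z) ->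
  (forall x, RS x x) ->
  (forall x y, RS x y -> RS y x) ->
  (forall v s, Q v s -> RV v s) ->
  Forall2 Q vs ss ->
  NoDup vs -> (forall v w, In v vs -> In w vs -> v <> w -> ~ RV v w) ->
  NoDup ss /\ (forall s1 s2, In s1 ss -> In s2 ss -> s1 <> s2 -> ~ RS s1 s2).
Proof.
  intros HSV Vsym Vtr Srefl Ssym HQ HF. induction HF as [|v s vs ss Hq HF IH]; intros HN HP.
  - split; [constructor|]. intros s1 s2 [].
  - inversion HN as [|? ? Hnotin HNd]; subst.
    destruct IH as [IH1 IH2]; auto.
    { intros a b Ha Hb; apply HP; simpl; auto. }
    assert (Cl : forall s2, In s2 ss -> ~ RS s s2).
    { intros s2 Hs2 Hr. destruct (Forall2_in_r Q vs ss s2 HF Hs2) as [v2 [Hv2 Hq2]].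
      apply (HP v v2); simpl; auto.
      - intros ->. auto.
      - apply Vtr with s; auto. apply Vtr with s2; auto. }
    split.
    + constructor; auto. intros Hin. apply (Cl s Hin). auto.
    + intros s1 s2 [<-|H1] [<-|H2] Hne.
      * exfalso; auto.
      * apply Cl; auto.
      * intro Hr. apply (Cl s1); auto.
      * apply IH2; auto.
Qed.

Lemma direction {M : Type} (op : M -> M -> M) (e : M)
  (assoc : forall x y z, op x (op y z) = op (op x y) z)
  (idl : forall x, op e x = x) (idr : forall x, op x e = x) X Y F n :
  generates M op e X -> generates M op e Y ->
  at_least_inf_comps M op Y F n -> exists F', at_least_inf_comps M op X F' n.
Proof.
  intros GX GY [vs [Hlen [Hinf [HN HP]]]].
  destruct (suffix_words op e X Y) as [R1 [He1 HW1]].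
  { intros x _. apply GY. }
  destruct (suffix_words op e Y X) as [R2 [He2 HW2]].
  { intros x _. apply GX. }
  set (Fx := mulset op F R1). set (G := mulset op Fx R2).
  assert (T1 : forall u v, conn_minus M op X Fx u v -> conn_minus M op Y F u v).
  { apply (transfer op e assoc idr X Y F R1); auto. }
  assert (T2 : forall u v, conn_minus M op Y G u v -> conn_minus M op X Fx u v).
  { apply (transfer op e assoc idr Y X Fx R2); auto. }
  assert (I1 : forall z, In z F -> In z Fx) by (intros; apply (mulset_incl op e idr); auto).
  assert (I2 : forall z, In z Fx -> In z G) by (intros; apply (mulset_incl op e idr); auto).
  set (Q := fun v s => ~ In s G /\ conn_minus M op Y F v s /\
    infinite_set M (fun w => conn_minus M op Y G s w)).
  destruct (choose_list Q vs) as [ss Hss].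
  { intros v Hv. apply (survive op e assoc idl idr Y F G v GY); auto. }
  exists Fx, ss. split; [|split; [|split]].
  - rewrite <- Hlen. symmetry. eapply Forall2_length; eauto.
  - intros s Hs. destruct (Forall2_in_r Q vs ss s Hss Hs) as [v [_ [H1 [_ H3]]]].
    split; [intro; apply H1; auto|].
    intros [l Hl]. apply H3. exists l. intros w Hw. apply Hl. auto.
  - destruct (sep (conn_minus M op Y F) (conn_minus M op X Fx) Q vs ss) as [A _]; auto.
    + intros; apply conn_sym; auto.
    + intros; eapply rt_trans; eauto.
    + intros; apply rt_refl.
    + intros; apply conn_sym; auto.
    + intros v s [_ [H _]]; auto.
  - destruct (sep (conn_minus M op Y F) (conn_minus M op X Fx) Q vs ss) as [_ B]; auto.
    + intros; apply conn_sym; auto.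
    + intros; eapply rt_trans; eauto.
    + intros; apply rt_refl.
    + intros; apply conn_sym; auto.
    + intros v s [_ [H _]]; auto.
Qed.

Theorem corollary7p3 (M : Type) (op : M -> M -> M) (e : M)
  (assoc : forall x y z, op x (op y z) = op (op x y) z)
  (idl : forall x, op e x = x) (idr : forall x, op x e = x)
  (X Y : list M) :
  generates M op e X -> generates M op e Y ->
  num_ends M op X = num_ends M op Y.
Proof.
  intros GX GY.
  assert (HA : forall n, (exists F, at_least_inf_comps M op X F n) <->
                         (exists F, at_least_inf_comps M op Y F n)).
  { intros n; split; intros [F HF].
    - apply (direction op e assoc idl idr Y X F n); auto.
    - apply (direction op e assoc idl idr X Y F n); auto. }
  assert (E : (fun k => is_num_ends M op X k) = (fun k => is_num_ends M op Y k)).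
  { apply functional_extensionality. intros [m|]; apply propositional_extensionality; simpl.
    - split; intros [H1 H2]; split.
      + intros F n Hn. destruct (proj2 (HA n) (ex_intro _ F Hn)) as [F' HF']. eauto.
      + apply HA; auto.
      + intros F n Hn. destruct (proj1 (HA n) (ex_intro _ F Hn)) as [F' HF']. eauto.
      + apply HA; auto.
    - split; intros H n; apply HA; auto. }
  unfold num_ends. rewrite E. reflexivity.
Qed.
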